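(* Let $\mathbb{K}\in\{\mathbb{R},\mathbb{C}\}$ and let $X$ be an infinite-dimensional normed vector space over $\mathbb{K}$. Let $U\neq\emptyset$ be a convex open subset of $X$ and let $L$ be a linear subspace of $X$ with $\operatorname{codim} L\geq 2$. Then $U\setminus L$ is dense in $U$ and pathwise connected.
   Context: $\operatorname{codim} L$ denotes the (possibly finite, possibly infinite cardinal) algebraic codimension of $L$ in $X$: $\operatorname{codim} L=\kappa$ iff some Hamel basis $B$ of $X$ has a subset $B'$ with $\operatorname{span}(B')=L$ and $|B\setminus B'|=\kappa$. Topological notions refer to the norm topology. *)

(* Defs.v *)
From HB Require Import structures.
From mathcomp Require Import all_boot all_order all_algebra.
From mathcomp Require Import all_classical all_reals all_analysis.
From mathcomp Require Import complex.
Set Implicit Arguments. Unset Strict Implicit. Unset Printing Implicit Defensive.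
Import Order.TTheory GRing.Theory Num.Theory.
Import numFieldNormedType.Exports.
Local Open Scope classical_set_scope.
Local Open Scope ring_scope.

Section LinAlg.
Variables (K : numFieldType) (X : lmodType K).

Definition span (B : set X) : set X :=
  [set x | exists (s : seq X) (c : seq K),
      size c = size s /\ (forall v, v \in s -> B v) /\
      x = \sum_(i < size s) c`_i *: s`_i].

Definition lin_indep (B : set X) : Prop :=
  forall (s : seq X) (c : seq K),
    uniq s -> size c = size s -> (forall v, v \in s -> B v) ->
    \sum_(i < size s) c`_i *: s`_i = 0 -> forall i, (i < size s)%N -> c`_i = 0.

Definition hamel_basis (B : set X) : Prop := lin_indep B /\ span B = setT.

Definition lin_subspace (L : set X) : Prop :=
  L 0 /\ (forall x y, L x -> L y -> L (x + y)) /\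
  (forall (a : K) x, L x -> L (a *: x)).

Definition codim_ge2 (L : set X) : Prop :=
  exists B B' : set X, hamel_basis B /\ B' `<=` B /\ span B' = L /\
    exists b1 b2, (B `\` B') b1 /\ (B `\` B') b2 /\ b1 <> b2.

Definition infinite_dim : Prop := ~ exists s : seq X, span [set` s] = setT.

End LinAlg.

Definition path_connected (R : realType) (T : topologicalType) (A : set T) : Prop :=
  forall x y, A x -> A y ->
    exists f : R -> T, f 0 = x /\ f 1 = y /\
      {within `[0, 1], continuous f} /\ f @` `[0, 1] `<=` A.

(* Main.v *)
Require Import Defs.
From HB Require Import structures.
From mathcomp Require Import all_boot all_order all_algebra.
From mathcomp Require Import all_classical all_reals all_analysis.
From mathcomp Require Import complex.
Import Order.TTheory GRing.Theory Num.Theory.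
Import numFieldNormedType.Exports.
Local Open Scope classical_set_scope.
Local Open Scope ring_scope.
Local Open Scope convex_scope.
Set Implicit Arguments. Unset Strict Implicit. Unset Printing Implicit Defensive.

Section LA.
Variables (K : numFieldType) (X : lmodType K).

Lemma sum_seq_ord (t : seq X) (f : X -> K) :
  \sum_(v <- t) f v *: v = \sum_(i < size t) (map f t)`_i *: t`_i.
Proof.
rewrite (big_nth 0) big_mkord; apply: eq_bigr => i _.
by rewrite (nth_map 0).
Qed.

Lemma indep_seq (B : set X) (t : seq X) (f : X -> K) :
  lin_indep B -> uniq t -> (forall v, v \in t -> B v) ->
  \sum_(v <- t) f v *: v = 0 -> forall v, v \in t -> f v = 0.
Proof.
move=> HB ut tB s0 v vt.
have := HB t (map f t) ut (size_map _ _) tB; rewrite -sum_seq_ord => /(_ s0).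
move=> /(_ (index v t)); rewrite index_mem vt => /(_ isT).
by rewrite (nth_map 0) ?index_mem // nth_index.
Qed.

Lemma span_uniq (B : set X) x : Defs.span B x ->
  exists (t : seq X) (f : X -> K), uniq t /\ (forall v, v \in t -> B v) /\
    x = \sum_(v <- t) f v *: v.
Proof.
move=> [s [c [sz [sB ->]]]].
exists (undup s), (fun v => \sum_(i < size s | s`_i == v) c`_i).
split; first exact: undup_uniq.
split; first by move=> v; rewrite mem_undup; exact: sB.
have E : forall v, (\sum_(i < size s | s`_i == v) c`_i) *: v =
    \sum_(i < size s) (if s`_i == v then c`_i *: s`_i else 0).
  move=> v; rewrite scaler_suml big_mkcond /=; apply: eq_bigr => i _.
  by case: eqP => [->|]; rewrite ?scale0r.
under [RHS]eq_bigr => v _ do rewrite E.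
rewrite /= exchange_big /=; apply: eq_bigr => i _.
rewrite (bigD1_seq s`_i) ?undup_uniq ?mem_undup ?mem_nth //= eqxx.
rewrite big1 ?addr0 // => v /negbTE; by rewrite eq_sym => ->.
Qed.

Lemma pair_indep (B B' : set X) b1 b2 (a1 a2 : K) :
  lin_indep B -> B' `<=` B -> (B `\` B') b1 -> (B `\` B') b2 -> b1 <> b2 ->
  Defs.span B' (a1 *: b1 + a2 *: b2) -> a1 = 0 /\ a2 = 0.
Proof.
move=> HB sB [Bb1 nb1] [Bb2 nb2] b12 /span_uniq [t [f [ut [tB' E]]]].
pose g v := if v == b1 then a1 else if v == b2 then a2 else - f v.
have b1t : b1 \notin t by apply/negP => /tB'.
have b2t : b2 \notin t by apply/negP => /tB'.
have ne21 : (b2 == b1) = false by apply/eqP => H; apply: b12.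
have u3 : uniq [:: b1, b2 & t].
  by rewrite /= inE negb_or b1t b2t ut andbT /= eq_sym ne21.
have B3 : forall v, v \in [:: b1, b2 & t] -> B v.
  by move=> v; rewrite !inE => /orP[/eqP->|/orP[/eqP->|/tB'/sB]].
have S3 : \sum_(v <- [:: b1, b2 & t]) g v *: v = 0.
  rewrite !big_cons /g eqxx ne21 eqxx.
  under eq_big_seq => v vt.
    have -> : (v == b1) = false by apply/eqP => e; rewrite -e vt in b1t.
    have -> : (v == b2) = false by apply/eqP => e; rewrite -e vt in b2t.
    over.
  by rewrite /= addrA E; under eq_bigr do rewrite scaleNr; rewrite sumrN subrr.
have H := @indep_seq B [:: b1, b2 & t] g HB u3 B3 S3.
have := H b1; rewrite /g eqxx inE eqxx => /(_ isT) ->.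
by have := H b2; rewrite /g ne21 eqxx !inE eqxx orbT => /(_ isT) ->.
Qed.

Lemma subsp_sub (L : set X) x y : lin_subspace L -> L x -> L y -> L (x - y).
Proof.
move=> [L0 [LD LZ]] Lx Ly; apply: LD => //.
by rewrite -scaleN1r; exact: LZ.
Qed.

Lemma subsp_norm (L : set X) (p q : K) d b : lin_subspace L -> p != 0 ->
  L (p *: d + q *: b) -> L (d + (q / p) *: b).
Proof.
move=> [L0 [LD LZ]] pn /(LZ p^-1).
by rewrite scalerDr !scalerA mulVf // scale1r mulrC.
Qed.

Lemma exists_w (L : set X) : lin_subspace L -> codim_ge2 L ->
  forall d, ~ L d -> exists w, forall p q : K, L (p *: d + q *: w) -> p = 0 /\ q = 0.
Proof.
move=> HL [B [B' [[HB _] [sB [spL [b1 [b2 [h1 [h2 b12]]]]]]]]] d nd.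
have key a1 a2 : L (a1 *: b1 + a2 *: b2) -> a1 = 0 /\ a2 = 0.
  by move=> H; apply: (pair_indep HB sB h1 h2 b12); rewrite spL.
have [P1|n1] := pselect (forall p q : K, L (p *: d + q *: b1) -> p = 0 /\ q = 0).
  by exists b1.
have [P2|n2] := pselect (forall p q : K, L (p *: d + q *: b2) -> p = 0 /\ q = 0).
  by exists b2.
exfalso.
move: n1 => /existsNP [p1 /existsNP [q1 /not_implyP [L1 N1]]].
move: n2 => /existsNP [p2 /existsNP [q2 /not_implyP [L2 N2]]].
have p1n : p1 != 0.
  apply/eqP => p10; apply: N1; split => //.
  have L1' : L (q1 *: b1 + 0 *: b2).
    by rewrite scale0r addr0; move: L1; rewrite p10 scale0r add0r.
  by case: (key _ _ L1').
have p2n : p2 != 0.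
  apply/eqP => p20; apply: N2; split => //.
  have L2' : L (0 *: b1 + q2 *: b2).
    by rewrite scale0r add0r; move: L2; rewrite p20 scale0r add0r.
  by case: (key _ _ L2').
have M1 := subsp_norm HL p1n L1.
have M2 := subsp_norm HL p2n L2.
have := subsp_sub HL M1 M2.
rewrite opprD addrACA subrr add0r -scaleNr => /key [e1 _].
by apply: nd; move: M1; rewrite e1 scale0r addr0.
Qed.

End LA.

Lemma exists_notin (K : numFieldType) (X : lmodType K) (L : set X) :
  codim_ge2 L -> exists b, ~ L b.
Proof.
move=> [B [B' [[HB _] [sB [spL [b1 [b2 [h1 [h2 b12]]]]]]]]].
exists b1 => Lb; have [] := @pair_indep _ _ B B' b1 b2 1 0 HB sB h1 h2 b12.
  by rewrite spL scale0r addr0 scale1r.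
by move=> /eqP; rewrite oner_eq0.
Qed.

Section Top.
Variables (K : numFieldType) (X : normedModType K).

Lemma near_nonzero (A : set X) x w : nbhs x A -> exists c : K, c != 0 /\ A (x + c *: w).
Proof.
move=> Ax.
have cv : (fun e : K => x + e *: w) @ (0:K) --> x.
  have : (fun e : K => x + e *: w) @ (0:K) --> x + 0 *: w.
    by apply: (@cvgD K X K (nbhs (0:K)) _ (fun=> x) (fun e : K => e *: w) x (0 *: w)); [exact: cvg_cst | apply: cvgZr_tmp; exact: cvg_id].
  by rewrite scale0r addr0.
have /nbhs_ballP [r /= r0 Hr] := cv A Ax.
have r2 : 0 < r / 2 by rewrite divr_gt0 // ltr0n.
exists (r / 2); split; first by rewrite gt_eqF.
apply: Hr; rewrite -ball_normE /ball_ /= sub0r normrN ger0_norm ?ltW //.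
by rewrite ltr_pdivrMr ?ltr0n // ltr_pMr // ltr1n.
Qed.

Variables (R : realType) (iota : R -> K).
Hypotheses (i0 : iota 0 = 0) (i1 : iota 1 = 1)
  (i01 : forall t, 0 <= t <= 1 -> 0 <= iota t <= 1) (ic : continuous iota).

Lemma gcont (x d w : X) (c : K) :
  continuous (fun s : K => x + s *: d + (c * s * (1 - s)) *: w).
Proof.
move=> s.
apply: (@cvgD K X K (nbhs s) _ (fun s : K => x + s *: d) (fun s : K => (c * s * (1 - s)) *: w)).
  apply: (@cvgD K X K (nbhs s) _ (fun=> x) (fun s : K => s *: d)); first exact: cvg_cst.
  by apply: cvgZr_tmp; exact: cvg_id.
apply: cvgZr_tmp.
apply: (@cvgM K K (nbhs s) _ (fun s : K => c * s) (fun s : K => 1 - s)).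
  by apply: (@cvgM K K (nbhs s) _ (fun=> c) id); [exact: cvg_cst | exact: cvg_id].
by apply: (@cvgB K K K (nbhs s) _ (fun=> 1) id); [exact: cvg_cst | exact: cvg_id].
Qed.

Lemma path_build (U L : set X) x y c w : convex_set U -> U x -> U y -> U (x + c *: w) ->
  (forall s : K, 0 <= s <= 1 -> ~ L (x + s *: (y - x) + (c * s * (1 - s)) *: w)) ->
  exists f : R -> X, f 0 = x /\ f 1 = y /\
      {within `[0, 1], continuous f} /\ f @` `[0, 1] `<=` U `\` L.
Proof.
move=> cU Ux Uy Uxw nL.
pose g := fun s : K => x + s *: (y - x) + (c * s * (1 - s)) *: w.
exists (g \o iota); split; [|split; [|split]].
- by rewrite /= /g i0 scale0r addr0 mulr0 mul0r scale0r addr0.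
- by rewrite /= /g i1 scale1r subrr mulr0 scale0r addr0 addrC subrK.
- apply: continuous_subspaceT => t; apply: continuous_comp; first exact: ic.
  exact: gcont.
move=> _ [t t01 <-].
have tt : 0 <= t <= 1 by move: t01; rewrite /= in_itv.
have /andP[s0 s1] := i01 tt.
split; last by apply: nL; rewrite s0 s1.
set s := iota t in s0 s1 *.
have Hm : U (x + (s * c) *: w).
  have := cU (x + c *: w) x (Itv01 s0 s1).
  rewrite !inE => /(_ Uxw Ux) /=.
  have -> : (x + c *: w : convex_lmodType X) <| Itv01 s0 s1 |> x =
    s *: (x + c *: w) + (1 - s) *: x := erefl.
  have -> : s *: (x + c *: w) + (1 - s) *: x = x + (s * c) *: w.
    by rewrite scalerDr scalerA addrAC -scalerDl [s + _]addrC subrK scale1r.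
  by [].
have := cU y (x + (s * c) *: w) (Itv01 s0 s1).
rewrite !inE => /(_ Uy Hm) /=.
have -> : (y : convex_lmodType X) <| Itv01 s0 s1 |> (x + (s * c) *: w) =
    s *: y + (1 - s) *: (x + (s * c) *: w) := erefl.
suff -> : s *: y + (1 - s) *: (x + (s * c) *: w) = g s by [].
rewrite /g scalerDr scalerA scalerBl scale1r scalerBr.
have -> : (1 - s) * (s * c) = c * s * (1 - s).
  by rewrite mulrC [s * c]mulrC.
by rewrite !addrA [s *: y + x]addrC.
Qed.

Lemma gen_main (U L : set X) : open U -> convex_set U -> lin_subspace L -> codim_ge2 L ->
  U `<=` closure (U `\` L) /\ path_connected R (U `\` L).
Proof.
move=> oU cU HL HC; split.
- move=> x Ux; have [xL|nxL] := pselect (L x); last by apply: subset_closure.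
  move=> B nB.
  have [b nb] := exists_notin HC.
  have nUB : nbhs x (U `&` B).
    by apply: filterI => //; apply: open_nbhs_nbhs; split.
  have [c [cn [Uc Bc]]] := near_nonzero b nUB.
  exists (x + c *: b); split => //; split => // Lc.
  apply: nb; have := subsp_sub HL Lc xL; rewrite addrC addKr.
  move=> /(proj2 (proj2 HL) c^-1).
  by rewrite scalerA mulVf // scale1r.
- move=> x y [Ux nx] [Uy ny].
  have [[s0 Ls0]|nos] := pselect (exists s0 : K, L (x + s0 *: (y - x))).
  + have nd : ~ L (y - x).
      move=> Ld; apply: nx; have := subsp_sub HL Ls0 ((proj2 (proj2 HL)) s0 _ Ld).
      by rewrite addrK.
    have [w Hw] := exists_w HL HC nd.
    have [c [cn Uc]] : exists c : K, c != 0 /\ U (x + c *: w).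
      by apply: near_nonzero; apply: open_nbhs_nbhs; split.
    apply: (path_build cU Ux Uy Uc) => s /andP[s0' s1'] Ls.
    have := subsp_sub HL Ls Ls0.
    have -> : x + s *: (y - x) + (c * s * (1 - s)) *: w - (x + s0 *: (y - x)) =
        (s - s0) *: (y - x) + (c * s * (1 - s)) *: w.
      rewrite scalerBl opprD !addrA [x + _ + _ - x]addrAC [x + _ - x]addrAC subrr add0r.
      by rewrite addrAC.
    move=> /Hw [_ /eqP]; rewrite !mulf_eq0 (negbTE cn) /= subr_eq0.
    move=> /orP[/eqP s0e|/eqP s1e].
      by apply: nx; move: Ls; rewrite s0e scale0r addr0 mulr0 mul0r scale0r addr0.
    apply: ny; move: Ls.
    by rewrite -s1e scale1r subrr mulr0 scale0r addr0 addrC subrK.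
  + apply: (@path_build U L x y 0 0 cU Ux Uy); first by rewrite scaler0 addr0.
    move=> s _; rewrite scaler0 addr0 => Ls; apply: nos; by exists s.
Qed.

End Top.

Local Open Scope complex_scope.

Lemma normC_real (R : realType) (t : R) : `|t%:C| = `|t|%:C.
Proof. by rewrite normc_def /= expr0n addr0 sqrtr_sqr. Qed.

Definition CC (R : realType) : numFieldType := R[i].

Lemma contC (R : realType) : continuous (fun t : R => (t%:C : CC R)).
Proof.
move=> t; apply/cvgrPdist_lt => e e0.
have eR : e = ((complex.Re e)%:C : CC R) by rewrite RRe_real // gtr0_real.
have re0 : 0 < complex.Re e by rewrite -ltcR -eR.
have := proj1 (@cvgrPdist_lt _ _ _ (nbhs t) _ id t) (cvg_id (F := nbhs t)) _ re0.
move=> /(_ (nbhs_filter t)); apply: filterS => s hs.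
have -> : t%:C - s%:C = (t - s)%:C :> R[i] by simpc.
by rewrite normC_real eR ltcR.
Qed.

Theorem lemma1 (R : realType) :
  (forall (X : normedModType R) (U L : set X),
      infinite_dim X -> U !=set0 -> open U -> convex_set U ->
      lin_subspace L -> codim_ge2 L ->
      U `<=` closure (U `\` L) /\ path_connected R (U `\` L)) /\
  (forall (X : normedModType R[i]) (U L : set X),
      infinite_dim X -> U !=set0 -> open U -> convex_set U ->
      lin_subspace L -> codim_ge2 L ->
      U `<=` closure (U `\` L) /\ path_connected R (U `\` L)).
Proof.
split.
- move=> X U L _ _ oU cU HL HC.
  exact: (@gen_main R X R id erefl erefl (fun t h => h) (fun t => cvg_id) U L oU cU HL HC).
- move=> X U L _ _ oU cU HL HC.
  apply: (@gen_main (CC R) X R (fun t => t%:C) erefl erefl _ (@contC R) U L oU cU HL HC).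
  move=> t /andP[h0 h1]; rewrite ler0c h0 /=.
  by rewrite -[1 : R[i]]/(1%:C) lecR.
Qed.
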